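(* Let $S$ be a semigroup with tight twisting $\Phi$ and $0$-twisted semigroup $T_\Phi^0$. Then for every $\mathcal{K}\in\{\mathcal{R},\mathcal{L},\mathcal{D},\mathcal{J},\mathcal{H}\}$, as relations on $T_\Phi^0$, $\mathcal{K}^{T_\Phi^0}=\mathcal{K}^{S}\cup\{(0,0)\}$.
   Context: Green's relations are the standard ones; a superscript indicates the semigroup in which they are computed. $\mathbb{N}=\{0,1,2,\dots\}$. A twisting of a semigroup $S$ is a map $\Phi:S\times S\to\mathbb{N}$ with $\Phi(a,b)+\Phi(ab,c)=\Phi(a,bc)+\Phi(b,c)$ for all $a,b,c\in S$. It is tight if (1) for all $a,b\in S$ there is $a'\in S$ with $ab=a'b$ and $\Phi(a',b)=0$, and (2) for all $a,b\in S$ there is $b'\in S$ with $ab=ab'$ and $\Phi(a,b')=0$. For $S=(X,\cdot)$ with twisting $\Phi$, the $0$-twisted semigroup is $T_\Phi^0=(X\sqcup\{0\},* )$ where $a*b=ab$ if $a,b\neq0$ and $\Phi(a,b)=0$, and $a*b=0$ otherwise. *)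

(* Defs.v *)
From Stdlib Require Import Arith.

Section Defs.
Context {X : Type}.

Definition associative_op (m : X -> X -> X) : Prop :=
  forall a b c, m a (m b c) = m (m a b) c.

Definition is_twisting (m : X -> X -> X) (Phi : X -> X -> nat) : Prop :=
  forall a b c, Phi a b + Phi (m a b) c = Phi a (m b c) + Phi b c.

Definition tight (m : X -> X -> X) (Phi : X -> X -> nat) : Prop :=
  (forall a b, exists a', m a b = m a' b /\ Phi a' b = 0) /\
  (forall a b, exists b', m a b = m a b' /\ Phi a b' = 0).

(* the 0-twisted semigroup T^0_Phi on X ⊔ {0}: None plays the role of 0 *)
Definition twisted0 (m : X -> X -> X) (Phi : X -> X -> nat)
  (u v : option X) : option X :=
  match u, v with
  | Some a, Some b => if Nat.eqb (Phi a b) 0 then Some (m a b) else None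
  | _, _ => None
  end.
End Defs.

Section Green.
Context {Y : Type} (op : Y -> Y -> Y).

(* a ∈ b S^1 *)
Definition in_right_ideal (a b : Y) : Prop := a = b \/ exists x, a = op b x.
(* a ∈ S^1 b *)
Definition in_left_ideal (a b : Y) : Prop := a = b \/ exists x, a = op x b.
(* a ∈ S^1 b S^1 *)
Definition in_ideal (a b : Y) : Prop :=
  a = b \/ (exists x, a = op x b) \/ (exists y, a = op b y) \/
  (exists x y, a = op (op x b) y).

Definition greenR (a b : Y) : Prop := in_right_ideal a b /\ in_right_ideal b a.
Definition greenL (a b : Y) : Prop := in_left_ideal a b /\ in_left_ideal b a.
Definition greenJ (a b : Y) : Prop := in_ideal a b /\ in_ideal b a.
Definition greenH (a b : Y) : Prop := greenR a b /\ greenL a b.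
Definition greenD (a b : Y) : Prop := exists c, greenR a c /\ greenL c b.
End Green.

Inductive green_kind := KR | KL | KD | KJ | KH.

Definition green {Y : Type} (K : green_kind) (op : Y -> Y -> Y) : Y -> Y -> Prop :=
  match K with
  | KR => greenR op
  | KL => greenL op
  | KD => greenD op
  | KJ => greenJ op
  | KH => greenH op
  end.

(* Main.v *)
Require Import Defs.
From Stdlib Require Import Arith.

Section H.
Context {X : Type} (m : X -> X -> X) (Phi : X -> X -> nat).
Hypothesis ht : tight m Phi.
Notation T := (twisted0 m Phi).

Lemma tw_some u v c : T u v = Some c ->
  exists a b, u = Some a /\ v = Some b /\ Phi a b = 0 /\ c = m a b.
Proof.
  destruct u as [a|], v as [b|]; simpl; try discriminate.
  destruct (Nat.eqb_spec (Phi a b) 0); intro H; try discriminate.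
  injection H; intros; subst; eauto 7.
Qed.

Lemma tw_ok a b : Phi a b = 0 -> T (Some a) (Some b) = Some (m a b).
Proof. intro H; simpl; rewrite H; reflexivity. Qed.

Lemma tw_noneL v : T None v = None. Proof. reflexivity. Qed.
Lemma tw_noneR u : T u None = None. Proof. destruct u; reflexivity. Qed.

Lemma rid a b : in_right_ideal T (Some a) (Some b) <-> in_right_ideal m a b.
Proof.
  split; intros [H|[x H]].
  - left; congruence.
  - right. symmetry in H. apply tw_some in H.
    destruct H as (a'&b'&E1&E2&E3&E4). injection E1; intros; subst; eauto.
  - left; congruence.
  - right. destruct (proj2 ht b x) as [x' [E F]].
    exists (Some x'). rewrite tw_ok by exact F. congruence.
Qed.

Lemma lid a b : in_left_ideal T (Some a) (Some b) <-> in_left_ideal m a b.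
Proof.
  split; intros [H|[x H]].
  - left; congruence.
  - right. symmetry in H. apply tw_some in H.
    destruct H as (a'&b'&E1&E2&E3&E4). injection E2; intros; subst; eauto.
  - left; congruence.
  - right. destruct (proj1 ht x b) as [x' [E F]].
    exists (Some x'). rewrite tw_ok by exact F. congruence.
Qed.

Lemma iid a b : in_ideal T (Some a) (Some b) <-> in_ideal m a b.
Proof.
  split.
  - intros [H|[[x H]|[[y H]|[x [y H]]]]].
    + left; congruence.
    + right; left. symmetry in H. apply tw_some in H.
      destruct H as (a'&b'&E1&E2&E3&E4). injection E2; intros; subst; eauto.
    + right; right; left. symmetry in H. apply tw_some in H.
      destruct H as (a'&b'&E1&E2&E3&E4). injection E1; intros; subst; eauto.
    + right; right; right. symmetry in H. apply tw_some in H.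
      destruct H as (a'&b'&E1&E2&E3&E4). subst.
      apply tw_some in E1.
      destruct E1 as (a2&b2&F1&F2&F3&F4). injection F2; intros; subst; eauto.
  - intros [H|[[x H]|[[y H]|[x [y H]]]]].
    + left; congruence.
    + right; left. destruct (proj1 ht x b) as [x' [E F]].
      exists (Some x'). rewrite tw_ok by exact F. congruence.
    + right; right; left. destruct (proj2 ht b y) as [y' [E F]].
      exists (Some y'). rewrite tw_ok by exact F. congruence.
    + right; right; right.
      destruct (proj2 ht (m x b) y) as [y' [E F]].
      destruct (proj1 ht x b) as [x' [E' F']].
      exists (Some x'), (Some y'). rewrite tw_ok by exact F'.
      rewrite E' in F. rewrite tw_ok by exact F. congruence.
Qed.

Lemma rid_n a : in_right_ideal T (Some a) None -> False.
Proof. intros [H|[x H]]; discriminate. Qed.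
Lemma lid_n a : in_left_ideal T (Some a) None -> False.
Proof. intros [H|[x H]]; [discriminate|rewrite tw_noneR in H; discriminate]. Qed.
Lemma iid_n a : in_ideal T (Some a) None -> False.
Proof.
  intros [H|[[x H]|[[y H]|[x [y H]]]]]; try discriminate.
  - rewrite tw_noneR in H; discriminate.
  - rewrite tw_noneR in H; discriminate.
Qed.
End H.

Theorem mainTheorem3 (X : Type) (m : X -> X -> X) (Phi : X -> X -> nat) :
  associative_op m -> is_twisting m Phi -> tight m Phi ->
  forall (K : green_kind) (u v : option X),
    green K (twisted0 m Phi) u v <->
    ((exists a b, u = Some a /\ v = Some b /\ green K m a b) \/
     (u = None /\ v = None)).
Proof.
  intros _ _ ht K u v.
  pose proof (rid m Phi ht) as R. pose proof (lid m Phi ht) as L.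
  pose proof (iid m Phi ht) as I.
  pose proof (@rid_n X m Phi) as Rn. pose proof (@lid_n X m Phi) as Ln.
  pose proof (@iid_n X m Phi) as In.
  destruct K; simpl; unfold greenR, greenL, greenJ, greenH, greenD.
  - destruct u as [a|], v as [b|]; split.
    + rewrite !R. intros; left; eauto.
    + intros [(a'&b'&E1&E2&H)|[E1 E2]]; try discriminate.
      injection E1; injection E2; intros; subst. rewrite !R; exact H.
    + intros [H1 H2]; exfalso; eauto.
    + intros [(a'&b'&E1&E2&H)|[E1 E2]]; discriminate.
    + intros [H1 H2]; exfalso; eauto.
    + intros [(a'&b'&E1&E2&H)|[E1 E2]]; discriminate.
    + intros; right; auto.
    + intros; split; left; auto.
  - destruct u as [a|], v as [b|]; split.
    + rewrite !L. intros; left; eauto.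
    + intros [(a'&b'&E1&E2&H)|[E1 E2]]; try discriminate.
      injection E1; injection E2; intros; subst. rewrite !L; exact H.
    + intros [H1 H2]; exfalso; eauto.
    + intros [(a'&b'&E1&E2&H)|[E1 E2]]; discriminate.
    + intros [H1 H2]; exfalso; eauto.
    + intros [(a'&b'&E1&E2&H)|[E1 E2]]; discriminate.
    + intros; right; auto.
    + intros; split; left; auto.
  - split.
    + intros [c [[H1 H2] [H3 H4]]].
      destruct u as [a|], c as [c|]; try (exfalso; eauto; fail).
      * destruct v as [b|]; [|exfalso; eauto].
        left. exists a, b. repeat split; auto.
        exists c. unfold greenR, greenL. rewrite <- !R, <- !L. tauto.
      * destruct v as [b|]; [exfalso; eauto|]. right; auto.
    + intros [(a&b&E1&E2&[c [[H1 H2] [H3 H4]]])|[E1 E2]]; subst.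
      * exists (Some c). unfold greenR, greenL. rewrite !R, !L. tauto.
      * exists None. repeat split; left; auto.
  - destruct u as [a|], v as [b|]; split.
    + rewrite !I. intros; left; eauto.
    + intros [(a'&b'&E1&E2&H)|[E1 E2]]; try discriminate.
      injection E1; injection E2; intros; subst. rewrite !I; exact H.
    + intros [H1 H2]; exfalso; eauto.
    + intros [(a'&b'&E1&E2&H)|[E1 E2]]; discriminate.
    + intros [H1 H2]; exfalso; eauto.
    + intros [(a'&b'&E1&E2&H)|[E1 E2]]; discriminate.
    + intros; right; auto.
    + intros; split; left; auto.
  - destruct u as [a|], v as [b|]; split; unfold greenR, greenL.
    + rewrite !R, !L. intros; left; eauto.
    + intros [(a'&b'&E1&E2&H)|[E1 E2]]; try discriminate.
      injection E1; injection E2; intros; subst. rewrite !R, !L; exact H.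
    + intros [[H1 H2] _]; exfalso; eauto.
    + intros [(a'&b'&E1&E2&H)|[E1 E2]]; discriminate.
    + intros [[H1 H2] _]; exfalso; eauto.
    + intros [(a'&b'&E1&E2&H)|[E1 E2]]; discriminate.
    + intros; right; auto.
    + intros; repeat split; left; auto.
Qed.
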